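(* Let $\mathcal{N}=\{1,\dots,n\}$ be a finite set of agents, $\mathcal{S}$ a finite global state space and $\mathcal{A}=\prod_{i\in\mathcal{N}}\mathcal{A}_i$ a finite joint action space, where each global state $\mathbf{s}$ determines local states $s_i$ and each joint action is $\mathbf{a}=(a_1,\dots,a_n)$. Let $\alpha\ge0$, $\gamma\in[0,1)$, let $\phi^*_0,\phi^*_1,\dots,\phi^*_n\in\mathbb{R}$, and for each $i$ let $\nu^*_i(s_i)$ and $q^*_i(s_i,a_i)$ be real-valued local value and $Q$-functions. Suppose the weight function is $$w^{\text{tot}}_{\boldsymbol{\nu}^*}(\mathbf{s},\mathbf{a})=e^{-1}\exp\Big(\frac{1}{1+\alpha}\Big(\sum_{i\in\mathcal{N}}\phi^*_i\big(q^*_i(s_i,a_i)-\nu^*_i(s_i)\big)+\gamma\phi^*_0\Big)\Big).$$ Let $\rho^U_{\text{tot}}(\mathbf{s},\mathbf{a})=d^U(\mathbf{s})\,\mu^U(\mathbf{a}\mid\mathbf{s})$ be the state-action distribution of the union dataset, with joint behavior policy $\mu^U$, and assume $\mu^U$ is decomposable into local behavior policies: $\mu^U(\mathbf{a}\mid\mathbf{s})=\prod_{i\in\mathcal{N}}\mu^U_i(a_i\mid s_i)$. Let $\pi_i^*$ be an optimal solution to the local weighted behavior cloning objective $$\max_{\pi_i}\ \mathbb{E}_{(\mathbf{s},\mathbf{a})\sim\rho^U_{\text{tot}}}\big[w^{\text{tot}}_{\boldsymbol{\nu}^*}(\mathbf{s},\mathbf{a})\log\pi_i(a_i\mid s_i)\big].$$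 Then $$\pi^*_i(a_i\mid s_i)=\frac{1}{\Delta(s_i)}\exp\Big(\frac{\phi^*_i}{1+\alpha}\,q^*_i(s_i,a_i)+\log\mu^U_i(a_i\mid s_i)\Big),\quad \Delta(s_i)=\sum_{a_i\in\mathcal{A}_i}\exp\Big(\frac{\phi^*_i}{1+\alpha}\,q^*_i(s_i,a_i)+\log\mu^U_i(a_i\mid s_i)\Big).$$
   Context: In the paper, $\boldsymbol{\nu}^*=\{\nu^*_i\}$ and $\phi^*$ are optimal parameters of a linear mixing $\nu^{\text{tot}*}(\mathbf{s})=\sum_i\phi^*_i\nu^*_i(s_i)+\phi^*_0$ of local value functions; the reward $r(\mathbf{s},\mathbf{a})=\log(\rho^E_{\text{tot}}/\rho^U_{\text{tot}})$ is assumed to decompose as $\sum_i\phi^*_i r_i(s_i,a_i)+\phi^*_0$; and $q^*_i(s_i,a_i)=r_i(s_i,a_i)+\gamma\,\mathbb{E}_{s_i'\mid s_i,a_i}[\nu^*_i(s_i')]$. Under these assumptions the weight $w^{\text{tot}}_{\boldsymbol{\nu}^*}=\exp(A^{\text{tot}}_{\boldsymbol{\nu}^*}/(1+\alpha)-1)$ takes the displayed decomposed form, which is what the statement uses. $\Delta(s_i)$ is the normalization constant. *)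

(* Defs.v *)
From HB Require Import structures.
From mathcomp Require Import all_boot all_order all_algebra.
From mathcomp Require Import reals sequences exp.
Set Implicit Arguments. Unset Strict Implicit. Unset Printing Implicit Defensive.
Import Order.TTheory GRing.Theory Num.Theory.
Local Open Scope ring_scope.

Section Defs.
Variable R : realType.

Definition is_distr (T : finType) (p : T -> R) : Prop :=
  (forall t, 0 <= p t) /\ \sum_(t : T) p t = 1.

(* a conditional distribution (policy) pi(b | t) with full support,
   so that log pi(b | t) is a genuine real number *)
Definition pos_policy (T B : finType) (p : T -> B -> R) : Prop :=
  (forall t b, 0 < p t b) /\ (forall t, \sum_(b : B) p t b = 1).

Variables (n : nat) (S : finType) (Sl A : 'I_n -> finType)
  (loc : forall i : 'I_n, S -> Sl i).

Definition jaction := {dffun forall i : 'I_n, A i}.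

Definition wtot (alpha gamma phi0 : R) (phi : 'I_n -> R)
  (q : forall i : 'I_n, Sl i -> A i -> R) (nu : forall i : 'I_n, Sl i -> R)
  (s : S) (a : jaction) : R :=
  expR (-1) * expR ((1 + alpha)^-1 *
    (\sum_(i < n) phi i * (q i (loc i s) (a i) - nu i (loc i s)) + gamma * phi0)).

Definition local_wbc_obj (d : S -> R) (mu : S -> jaction -> R) (w : S -> jaction -> R)
  (i : 'I_n) (pi : Sl i -> A i -> R) : R :=
  \sum_(s : S) \sum_(a : jaction) d s * mu s a * w s a * ln (pi (loc i s) (a i)).

Definition Delta (alpha phii : R) (i : 'I_n) (qi : Sl i -> A i -> R)
  (mui : Sl i -> A i -> R) (si : Sl i) : R :=
  \sum_(b : A i) expR (phii / (1 + alpha) * qi si b + ln (mui si b)).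

End Defs.

(* Main.v *)
Require Import Defs.
From HB Require Import structures.
From mathcomp Require Import all_boot all_order all_algebra.
From mathcomp Require Import reals sequences exp.
From mathcomp Require Import ring lra.
Import Order.TTheory GRing.Theory Num.Theory.
Local Open Scope ring_scope.

Lemma expR_strict (R : realType) (y : R) : y != 0 -> 1 + y < expR y.
Proof.
move=> y0.
have -> : expR y = expR (y / 2) * expR (y / 2) by rewrite -expRD; congr expR; field.
have hy2 : 0 < y * y by rewrite lt_def mulf_neq0 //= -expr2 sqr_ge0.
have hE := expR_ge1Dx (y / 2).
have hE0 := expR_gt0 (y / 2).
case: (ltP (1 + y / 2) 0) => h.
  nra.
nra.
Qed.

Lemma expR_ln_diff (R : realType) (x y : R) : 0 < x -> 0 < y ->
  expR (ln x - ln y) = x / y.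
Proof.
move=> x0 y0; rewrite expRD expRN !lnK // qualifE //.
Qed.

Lemma term_le (R : realType) (x y : R) : 0 < x -> 0 < y ->
  y * (ln x - ln y) <= x - y.
Proof.
move=> x0 y0; have := expR_ge1Dx (ln x - ln y); rewrite expR_ln_diff //.
move=> h; have := ler_wpM2l (ltW y0) h; rewrite mulrCA divff ?gt_eqF // mulr1.
lra.
Qed.

Lemma term_lt (R : realType) (x y : R) : 0 < x -> 0 < y -> x != y ->
  y * (ln x - ln y) < x - y.
Proof.
move=> x0 y0 xy.
have u0 : ln x - ln y != 0.
  apply/negP => /eqP h; move/negP: xy; apply; apply/eqP.
  apply: (@ln_inj R); rewrite ?qualifE //; lra.
have := @expR_strict R _ u0; rewrite expR_ln_diff //.
move=> h; have := h; rewrite -(ltr_pM2l y0); rewrite mulrCA divff ?gt_eqF // mulr1.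
lra.
Qed.

Lemma gibbs (R : realType) (B : finType) (c ps : B -> R) :
  (forall b, 0 < c b) -> (forall b, 0 < ps b) -> \sum_b ps b = 1 ->
  \sum_b c b * (ln (c b / \sum_b' c b') - ln (ps b)) <= 0 ->
  forall b, ps b = c b / \sum_b' c b'.
Proof.
move=> c0 ps0 ps1 hle b0.
set Z := \sum_b' c b' in hle *.
have Z0 : 0 < Z.
  rewrite /Z (bigD1 b0) //=; apply: ltr_wpDr; last exact: c0.
  by apply: sumr_ge0 => b _; exact: ltW.
set p := fun b => c b / Z.
have p0 : forall b, 0 < p b by move=> b; rewrite /p divr_gt0.
have p1 : \sum_b p b = 1.
  by rewrite /p -mulr_suml divff // gt_eqF.
apply/eqP; rewrite -/(p b0); apply/negPn/negP => hne.
have hlt : \sum_b p b * (ln (ps b) - ln (p b)) < \sum_b (ps b - p b).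
  rewrite (bigD1 b0) //= [X in _ < X](bigD1 b0) //=.
  apply: ltr_leD; first exact: term_lt.
  by apply: ler_sum => b _; apply: term_le.
rewrite sumrB ps1 p1 subrr in hlt.
have : \sum_b c b * (ln (p b) - ln (ps b)) = - Z * \sum_b p b * (ln (ps b) - ln (p b)).
  rewrite mulr_sumr; apply: eq_bigr => b _; rewrite /p; field; by rewrite gt_eqF.
move=> heq; have hle2 : \sum_b c b * (ln (p b) - ln (ps b)) <= 0 := hle; rewrite heq in hle2.
have : 0 < - Z * \sum_b p b * (ln (ps b) - ln (p b)) by rewrite mulNr oppr_gt0 pmulr_rlt0.
lra.
Qed.

Set Implicit Arguments. Unset Strict Implicit.
Definition swp (T : eqType) (b b' x : T) := if x == b then b' else if x == b' then b else x.

Lemma swpK (T : eqType) (b b' : T) : involutive (swp b b').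
Proof.
move=> x; rewrite /swp.
case: (eqVneq x b) => [->|xb]; first by rewrite eqxx; case: eqVneq.
case: (eqVneq x b') => [->|xb']; first by rewrite eqxx.
by rewrite (negbTE xb) (negbTE xb').
Qed.

Lemma swp_eq (T : eqType) (b b' x : T) : (swp b b' x == b) = (x == b').
Proof.
rewrite /swp; have [xb|xb] := eqVneq x b.
  by subst x; rewrite eq_sym.
have [xb'|xb'] := eqVneq x b'; first by rewrite eqxx.
by rewrite (negbTE xb).
Qed.

Section Core.
Variables (n : nat) (A : 'I_n -> finType) (i : 'I_n).

Definition upd (a : jaction A) (x : A i) : jaction A :=
  finfun (@dfwith _ A (fun k => a k) i x).

Lemma upd_in a x : upd a x i = x.
Proof. by rewrite /upd ffunE dfwith_in. Qed.

Lemma upd_out a x j : i != j -> upd a x j = a j.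
Proof. by move=> ij; rewrite /upd ffunE dfwith_out. Qed.

Definition flip (b b' : A i) (a : jaction A) : jaction A := upd a (swp b b' (a i)).

Lemma flipK b b' : involutive (flip b b').
Proof.
move=> a; apply/ffunP => j; rewrite /flip.
case: (eqVneq i j) => [<-|ij]; first by rewrite !upd_in swpK.
by rewrite (upd_out _ _ ij) (upd_out _ _ ij).
Qed.

Lemma sum_indep (R : nmodType) (G : jaction A -> R) :
  (forall a x, G (upd a x) = G a) ->
  forall b b', \sum_(a : jaction A | a i == b) G a = \sum_(a : jaction A | a i == b') G a.
Proof.
move=> HG b b'; rewrite (reindex_inj (inv_inj (flipK b b'))) /=.
apply: eq_big => a; first by rewrite /flip upd_in swp_eq.
by move=> _; rewrite /flip HG.
Qed.

Lemma sum_factor (R : pzSemiRingType) (G : jaction A -> R) (f : A i -> R) (b0 : A i) :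
  (forall a x, G (upd a x) = G a) ->
  \sum_(a : jaction A) f (a i) * G a = (\sum_b f b) * \sum_(a : jaction A | a i == b0) G a.
Proof.
move=> HG.
rewrite (partition_big (fun a : jaction A => a i) predT) //= mulr_suml.
apply: eq_bigr => b _.
rewrite (sum_indep HG b0 b) mulr_sumr; apply: eq_bigr => a /eqP <-. done.
Qed.

End Core.

Unset Implicit Arguments. Set Strict Implicit.
Section F.
Variables (R : realType) (n : nat) (S : finType)
  (Sl A : 'I_n -> finType) (loc : forall i : 'I_n, S -> Sl i)
  (alpha gamma phi0 : R) (phi : 'I_n -> R)
  (nu : forall i : 'I_n, Sl i -> R) (q : forall i : 'I_n, Sl i -> A i -> R)
  (mu : S -> jaction A -> R)
  (mul : forall i : 'I_n, Sl i -> A i -> R) (i : 'I_n).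

Definition mf (t : Sl i) (b : A i) : R :=
  expR (phi i / (1 + alpha) * q i t b + ln (mul i t b)).

Definition Gf (s : S) (a : jaction A) : R :=
  expR (-1) * expR ((1 + alpha)^-1 *
    (\sum_(j < n | j != i) phi j * (q j (loc j s) (a j) - nu j (loc j s))
      - phi i * nu i (loc i s) + gamma * phi0))
  * \prod_(j < n | j != i) mul j (loc j s) (a j).

Lemma Gf_upd s a (x : A i) : Gf s (upd a x) = Gf s a.
Proof.
rewrite /Gf.
have -> : \prod_(j < n | j != i) mul j (loc j s) (upd a x j) = \prod_(j < n | j != i) mul j (loc j s) (a j).
  by apply: eq_bigr => j; rewrite eq_sym => ij; rewrite (upd_out _ _ ij).
have -> : \sum_(j < n | j != i) phi j * (q j (loc j s) (upd a x j) - nu j (loc j s)) = \sum_(j < n | j != i) phi j * (q j (loc j s) (a j) - nu j (loc j s)).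
  by apply: eq_bigr => j; rewrite eq_sym => ij; rewrite (upd_out _ _ ij).
by [].
Qed.

Lemma Gf_gt0 s a : (forall j t b, 0 < mul j t b) -> 0 < Gf s a.
Proof.
move=> hm; rewrite /Gf !mulr_gt0 ?expR_gt0 //.
by apply: prodr_gt0 => j _.
Qed.

Lemma factor s a : 0 <= alpha -> (forall j t b, 0 < mul j t b) ->
  (forall s a, mu s a = \prod_(j < n) mul j (loc j s) (a j)) ->
  mu s a * wtot loc alpha gamma phi0 phi q nu s a = mf (loc i s) (a i) * Gf s a.
Proof.
move=> ha hm hmu.
rewrite hmu /wtot /mf /Gf [\prod_(j < n) _](bigD1 i) //= [\sum_(j < n) _](bigD1 i) //=.
rewrite expRD lnK ?posrE ?hm //.
set P := \prod_(j < n | j != i) _.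
set T := \sum_(j < n | j != i) _.
set Q := q i (loc i s) (a i).
set V := nu i (loc i s).
set M := mul i (loc i s) (a i).
have h : expR ((1 + alpha)^-1 * (phi i * (Q - V) + T + gamma * phi0))
  = expR (phi i / (1 + alpha) * Q) *
    expR ((1 + alpha)^-1 * (T - phi i * V + gamma * phi0)).
  rewrite -expRD; congr expR.
  set c := (1 + alpha)^-1; ring.
rewrite h; ring.
Qed.
End F.

Theorem proposition5 (R : realType) (n : nat) (S : finType)
  (Sl A : 'I_n -> finType) (loc : forall i : 'I_n, S -> Sl i)
  (alpha gamma phi0 : R) (phi : 'I_n -> R)
  (nu : forall i : 'I_n, Sl i -> R) (q : forall i : 'I_n, Sl i -> A i -> R)
  (d : S -> R) (mu : S -> jaction A -> R)
  (mul : forall i : 'I_n, Sl i -> A i -> R)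
  (i : 'I_n) (pistar : Sl i -> A i -> R) :
  0 <= alpha -> 0 <= gamma -> gamma < 1 ->
  is_distr d ->
  (forall j : 'I_n, pos_policy (mul j)) ->
  (forall s a, mu s a = \prod_(j < n) mul j (loc j s) (a j)) ->
  pos_policy pistar ->
  (forall pi : Sl i -> A i -> R, pos_policy pi ->
     local_wbc_obj loc d mu (wtot loc alpha gamma phi0 phi q nu) pi
     <= local_wbc_obj loc d mu (wtot loc alpha gamma phi0 phi q nu) pistar) ->
  forall si : Sl i, (exists s : S, loc i s = si /\ 0 < d s) ->
  forall ai : A i,
    pistar si ai =
      expR (phi i / (1 + alpha) * q i si ai + ln (mul i si ai))
      / Delta alpha (phi i) (q i) (mul i) si.
Proof.
move=> ha hg hg1 [hd0 hd1] hmul hmu [hps0 hps1] hopt si [s0 [hs0 hds0]] ai.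
have hm : forall j t b, 0 < mul j t b by move=> j; exact: (hmul j).1.
pose G := Gf _ _ _ _ _ loc alpha gamma phi0 phi nu q mul i.
pose m := mf _ _ _ _ alpha phi q mul i.
pose K := fun s => \sum_(a : jaction A | a i == ai) G s a.
have formula : forall pi : Sl i -> A i -> R,
  local_wbc_obj loc d mu (wtot loc alpha gamma phi0 phi q nu) pi =
  \sum_s d s * K s * \sum_b m (loc i s) b * ln (pi (loc i s) b).
  move=> pi; rewrite /local_wbc_obj; apply: eq_bigr => s _.
  have e : forall a : jaction A,
    d s * mu s a * wtot loc alpha gamma phi0 phi q nu s a * ln (pi (loc i s) (a i))
    = d s * ((m (loc i s) (a i) * ln (pi (loc i s) (a i))) * G s a).
    move=> a; rewrite -(mulrA (d s))
      (factor _ _ _ _ _ loc alpha gamma phi0 phi nu q mu mul i s a ha hm hmu).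
    rewrite /m /G; ring.
  rewrite (eq_bigr _ (fun a _ => e a)) -mulr_sumr.
  rewrite (@sum_factor n A i R (G s) (fun b => m (loc i s) b * ln (pi (loc i s) b)) ai
     (Gf_upd _ _ _ _ _ loc alpha gamma phi0 phi nu q mul i s)).
  rewrite /K; ring.
have mpos : forall t b, 0 < m t b by move=> t b; rewrite /m /mf expR_gt0.
have Gpos : forall s a, 0 < G s a by move=> s a; exact: Gf_gt0.
pose Z := \sum_b m si b.
have Z0 : 0 < Z.
  rewrite /Z (bigD1 ai) //=; apply: ltr_wpDr; last exact: mpos.
  by apply: sumr_ge0 => b _; exact: ltW.
pose p := fun b => m si b / Z.
pose pi' := fun t b => if t == si then p b else pistar t b.
have hpi' : pos_policy pi'.
  split.
    move=> t b; rewrite /pi'; case: eqP => _ //.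
    by rewrite /p divr_gt0.
  move=> t; rewrite /pi'; case: eqP => _ //.
  by rewrite /p -mulr_suml divff // gt_eqF.
have hle := hopt pi' hpi'; rewrite !formula in hle.
set X := \sum_b m si b * (ln (p b) - ln (pistar si b)).
have hdiff : \sum_s d s * K s * \sum_b m (loc i s) b * ln (pi' (loc i s) b)
   - \sum_s d s * K s * \sum_b m (loc i s) b * ln (pistar (loc i s) b)
   = (\sum_(s | loc i s == si) d s * K s) * X.
  rewrite -sumrB mulr_suml [RHS]big_mkcond /=; apply: eq_bigr => s _.
  rewrite /pi' /=; case: (eqVneq (loc i s) si) => [e|ne].
    rewrite e /X -mulrBr -sumrB; congr (_ * _); apply: eq_bigr => b _.
    by rewrite mulrBr.
  rewrite /=.
  by rewrite subrr.
have Kge0 : forall s, 0 <= K s.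
  by move=> s; apply: sumr_ge0 => a _; exact: ltW.
have Kpos : 0 < K s0.
  have hex : forall j, exists b : A j, True.
    move=> j.
    have [b _|h0] := pickP (fun _ : A j => true); first by exists b.
    have := (hmul j).2 (loc j s0); rewrite big_pred0 // => /eqP.
    by rewrite eq_sym oner_eq0.
  have [f _] := fin_all_exists hex.
  pose a0 := upd (finfun f : jaction A) ai.
  rewrite /K (bigD1 a0) /=; last by rewrite upd_in.
  apply: ltr_wpDr; last exact: Gpos.
  by apply: sumr_ge0 => a _; exact: ltW.
have D0 : 0 < \sum_(s | loc i s == si) d s * K s.
  rewrite (bigD1 s0) /=; last by rewrite hs0.
  apply: ltr_wpDr; last exact: mulr_gt0.
  by apply: sumr_ge0 => s _; apply: mulr_ge0.
have hX : X <= 0.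
  rewrite -(pmulr_rle0 _ D0) -hdiff; lra.
exact: (gibbs _ _ _ _ (mpos si) (hps0 si) (hps1 si) hX ai).
Qed.
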